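(* For any Kleinian group $\Gamma$, the set $C_\Gamma=\{\psi\in\mathrm{PSL}_2\mathbb{C}\;|\;\psi\Gamma\psi^{-1}\cap\Gamma\text{ is nonelementary}\}$ is countable.
   Context: A Kleinian group is a discrete torsion-free subgroup of $\mathrm{PSL}_2\mathbb{C}$; it is elementary if its limit set has at most two points (equivalently, it is abelian), and nonelementary otherwise. *)

(* Defs.v *)
From mathcomp Require Import all_boot all_order all_algebra.
From mathcomp Require Import complex.
From mathcomp Require Import classical_sets cardinality reals Rstruct.
Import Order.TTheory GRing.Theory Num.Theory.
Local Open Scope ring_scope.
Local Open Scope complex_scope.
Local Open Scope classical_set_scope.

Definition CC : Type := (Rdefinitions.R)[i].

(* A subgroup of PSL_2(C) is represented by its
   full preimage in SL_2(C), i.e. a subgroup of SL_2(C) containing -1. *)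
Definition M2 : Type := 'M[CC]_2.

Definition SL2 (A : M2) : Prop := \det A = 1.

Definition psl_trivial (A : M2) : Prop := A = 1%:M \/ A = - 1%:M.

Definition psl_subgroup (G : set M2) : Prop :=
  [/\ (forall A, G A -> SL2 A),
      G 1%:M,
      (forall A B, G A -> G B -> G (A *m B)),
      (forall A, G A -> G (invmx A)) &
      (forall A, G A -> G (- A))].

(* discreteness: the identity is isolated (entrywise neighbourhood in
   SL_2(C); since G is closed under -1 this is discreteness in PSL_2(C)) *)
Definition psl_discrete (G : set M2) : Prop :=
  exists e : Rdefinitions.R, 0 < e /\
    forall A, G A -> (forall i j, `|A i j - (1%:M : M2) i j| < e%:C) ->
      psl_trivial A.

Definition psl_torsion_free (G : set M2) : Prop :=
  forall (A : M2) (n : nat), G A -> (0 < n)%N -> psl_trivial (A ^+ n) ->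
    psl_trivial A.

Definition kleinian (G : set M2) : Prop :=
  [/\ psl_subgroup G, psl_discrete G & psl_torsion_free G].

Definition psl_abelian (G : set M2) : Prop :=
  forall A B, G A -> G B -> A *m B = B *m A \/ A *m B = - (B *m A).

(* per the context: a Kleinian group is elementary iff it is abelian *)
Definition elementary (G : set M2) : Prop := psl_abelian G.
Definition nonelementary (G : set M2) : Prop := ~ elementary G.

Definition conjugate (psi : M2) (G : set M2) : set M2 :=
  [set psi *m A *m invmx psi | A in G].

(* C_Gamma, as a set of representatives in SL_2(C) *)
Definition C_set (G : set M2) : set M2 :=
  [set psi | SL2 psi /\ nonelementary (conjugate psi G `&` G)].

(* Main.v *)
Require Import Defs.
From mathcomp Require Import all_boot all_order all_algebra classical_sets cardinality complex reals Rstruct.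
From mathcomp Require Import boolp.
From Stdlib Require Import Classical.
From mathcomp Require Import ring lra.
Import Order.TTheory GRing.Theory Num.Theory.
Local Open Scope ring_scope.
Local Open Scope complex_scope.
Local Open Scope classical_set_scope.

Definition i0 : 'I_2 := ord0.
Definition i1 : 'I_2 := ord_max.

Lemma ord2 (i : 'I_2) : i = i0 \/ i = i1.
Proof. case: i => [[|[|n]]] Hi; [left|right|]; try exact: val_inj. by []. Qed.

Lemma mul2 (A B : M2) i j : (A *m B) i j = A i i0 * B i0 j + A i i1 * B i1 j.
Proof.
rewrite mxE !big_ord_recl big_ord0 addr0.
have -> : lift ord0 ord0 = i1 by apply: val_inj.
by [].
Qed.

Definition nu (z : CC) : Rdefinitions.R := Num.sqrt ((complex.Re z) ^+ 2 + (complex.Im z) ^+ 2).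

Lemma normE (z : CC) : `|z| = (nu z)%:C.
Proof. by rewrite normc_def. Qed.

Lemma nu_ge0 z : 0 <= nu z.
Proof. exact: sqrtr_ge0. Qed.

Lemma nuD x y : nu (x + y) <= nu x + nu y.
Proof. have := ler_normD x y. by rewrite !normE -rmorphD /= lecR. Qed.

Lemma nuM x y : nu (x * y) = nu x * nu y.
Proof. have := normrM x y. rewrite !normE -rmorphM /=. by case. Qed.

Lemma nuN x : nu (- x) = nu x.
Proof. have := normrN x. rewrite !normE. by case. Qed.

Lemma nuR (k : Rdefinitions.R) : nu (k%:C) = `|k|.
Proof. by rewrite /nu /= expr0n /= addr0 sqrtr_sqr. Qed.

Lemma nu_ReIm z : nu z <= `|complex.Re z| + `|complex.Im z|.
Proof.
rewrite {1}[z]complexE.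
apply: le_trans (nuD _ _) _.
rewrite nuM !nuR.
have -> : nu 'i%C = 1.
  by rewrite /nu /= expr0n /= add0r expr1n sqrtr1.
by rewrite mul1r.
Qed.

Lemma Re_le_nu z : `|complex.Re z| <= nu z.
Proof. have := normc_ge_Re z. by rewrite normE lecR. Qed.
Lemma count2 (V : Type) (S : set M2) (U : set V) (Rel : M2 -> V -> Prop) :
  countable U -> (forall x, S x -> exists u, U u /\ Rel x u) ->
  (forall x y u, S x -> S y -> Rel x u -> Rel y u -> y = x \/ y = - x) ->
  countable S.
Proof.
move=> cU ex fib.
have sub : S `<=` \bigcup_(u in U) [set x | S x /\ Rel x u].
  move=> x Sx; have [u [Uu Ru]] := ex x Sx; by exists u.
apply: (sub_countable (subset_card_le sub)).
apply: bigcup_countable => // u Uu.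
have [[x0 [Sx0 Rx0]]|nex] := pselect (exists x0, S x0 /\ Rel x0 u).
  have sub2 : [set x | S x /\ Rel x u] `<=` [set x0; - x0].
    move=> y [Sy Ry]; have [->|->] := fib _ _ _ Sx0 Sy Rx0 Ry; [by left|by right].
  apply: (sub_countable (subset_card_le sub2)).
  exact/finite_set_countable/finite_set2.
have -> : [set x | S x /\ Rel x u] = set0.
  by apply/seteqP; split => // x Hx; exfalso; apply: nex; exists x.
exact: countable0.
Qed.

Ltac solve_lin nz h :=
  apply: (mulfI nz);
  first [ rewrite -[LHS]addr0 -h; field; done
        | rewrite -[LHS]subr0 -h; field; done ].

Lemma key (F : fieldType) (u1 u2 u3 w1 w2 w3 v1 v2 v3 : F) :
  [|| v1 != 0, v2 != 0 | v3 != 0] ->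
  v1 * u2 - v2 * u1 = 0 -> u1 * v3 - v1 * u3 = 0 -> v2 * u3 - u2 * v3 = 0 ->
  v1 * w2 - v2 * w1 = 0 -> w1 * v3 - v1 * w3 = 0 -> v2 * w3 - w2 * v3 = 0 ->
  [/\ u1 * w2 - w1 * u2 = 0, u1 * w3 - w1 * u3 = 0 & u2 * w3 - w2 * u3 = 0].
Proof.
move=> /or3P [] nz h1 h2 h3 k1 k2 k3.
- have e2 : u2 = u1 * v2 / v1 by solve_lin nz h1.
  have e3 : u3 = u1 * v3 / v1 by solve_lin nz h2.
  have f2 : w2 = w1 * v2 / v1 by solve_lin nz k1.
  have f3 : w3 = w1 * v3 / v1 by solve_lin nz k2.
  by rewrite e2 e3 f2 f3; split; field.
- have e1 : u1 = u2 * v1 / v2 by solve_lin nz h1.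
  have e3 : u3 = u2 * v3 / v2 by solve_lin nz h3.
  have f1 : w1 = w2 * v1 / v2 by solve_lin nz k1.
  have f3 : w3 = w2 * v3 / v2 by solve_lin nz k3.
  by rewrite e1 e3 f1 f3; split; field.
- have e1 : u1 = u3 * v1 / v3 by solve_lin nz h2.
  have e2 : u2 = u3 * v2 / v3 by solve_lin nz h3.
  have f1 : w1 = w3 * v1 / v3 by solve_lin nz k2.
  have f2 : w2 = w3 * v2 / v3 by solve_lin nz k3.
  by rewrite e1 e2 f1 f2; split; field.
Qed.

Ltac fromE E := move/eqP: E; rewrite -subr_eq0 => /eqP E.

Ltac use0 G := first [ by rewrite -[RHS]addr0 -G; ring | by rewrite -[RHS]subr0 -G; ring ].

Lemma centr2 (g A B : M2) : g *m A = A *m g -> g *m B = B *m g ->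
  (exists p, g = p%:M) \/ A *m B = B *m A.
Proof.
move=> hA hB.
have [H|H] := boolP [|| g i0 i1 != 0, g i1 i0 != 0 | g i0 i0 - g i1 i1 != 0].
- right.
  have E1 := congr1 (fun M : M2 => M i0 i0) hA; have E2 := congr1 (fun M : M2 => M i0 i1) hA.
  have E3 := congr1 (fun M : M2 => M i1 i0) hA.
  have F1 := congr1 (fun M : M2 => M i0 i0) hB; have F2 := congr1 (fun M : M2 => M i0 i1) hB.
  have F3 := congr1 (fun M : M2 => M i1 i0) hB.
  move: E1 E2 E3 F1 F2 F3 => /=; rewrite !mul2 => E1 E2 E3 F1 F2 F3.
  fromE E1; fromE E2; fromE E3; fromE F1; fromE F2; fromE F3.
  have [] := @key _ (A i0 i1) (A i1 i0) (A i0 i0 - A i1 i1)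
     (B i0 i1) (B i1 i0) (B i0 i0 - B i1 i1) _ _ _ H.
  + by rewrite -E1; ring.
  + by rewrite -E2; ring.
  + by rewrite -E3; ring.
  + by rewrite -F1; ring.
  + by rewrite -F2; ring.
  + by rewrite -F3; ring.
  move=> G1 G2 G3.
  apply/matrixP => i j; rewrite !mul2.
  by case: (ord2 i) => ->; case: (ord2 j) => ->; [use0 G1|use0 G2|use0 G3|use0 G1].
- left; exists (g i0 i0).
  move: H; rewrite !negb_or !negbK => /and3P [/eqP q0 /eqP r0 /eqP ps].
  move/eqP: ps; rewrite subr_eq0 => /eqP ps.
  apply/matrixP => i j; rewrite !mxE.
  by case: (ord2 i) => ->; case: (ord2 j) => -> //=; rewrite ?mulr1n ?mulr0n.
Qed.

Lemma unitSL (A : M2) : SL2 A -> A \in unitmx.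
Proof. by rewrite /SL2 unitmxE => ->; rewrite unitr1. Qed.

Lemma bound_mx (M : M2) : exists r : Rdefinitions.R, 0 <= r /\ forall i j, nu (M i j) <= r.
Proof.
exists (nu (M i0 i0) + nu (M i0 i1) + nu (M i1 i0) + nu (M i1 i1)).
have := nu_ge0 (M i0 i0); have := nu_ge0 (M i0 i1);
have := nu_ge0 (M i1 i0); have := nu_ge0 (M i1 i1) => *.
split; first lra.
by move=> i j; case: (ord2 i) => ->; case: (ord2 j) => ->; lra.
Qed.

Lemma floor_close (x y s : Rdefinitions.R) : 0 < s ->
  Num.floor (x * s) = Num.floor (y * s) -> `|x - y| * s < 1.
Proof.
move=> s0 E.
have h1 := floor_le (x * s); have h2 := floorD1_gt (x * s).
have h3 := floor_le (y * s); have h4 := floorD1_gt (y * s).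
rewrite E in h1 h2. rewrite intrD in h2 h4.
rewrite -(gtr0_norm s0) -normrM ltr_norml; apply/andP; split; lra.
Qed.

Lemma ReB (x y : CC) : complex.Re (x - y) = complex.Re x - complex.Re y.
Proof. by case: x; case: y. Qed.
Lemma ImB (x y : CC) : complex.Im (x - y) = complex.Im x - complex.Im y.
Proof. by case: x; case: y. Qed.

Definition scl (e : Rdefinitions.R) (N : nat) : Rdefinitions.R := 4 * (N%:R + 1) / e.

Definition enc (e : Rdefinitions.R) (N : nat) (A : M2) : nat * ('M[int]_2 * 'M[int]_2) :=
  (N, (\matrix_(i, j) Num.floor (complex.Re (A i j) * scl e N),
       \matrix_(i, j) Num.floor (complex.Im (A i j) * scl e N))).

Definition bnd (A : M2) (N : nat) :=
  forall i j, nu (A i j) <= N%:R /\ nu (invmx A i j) <= N%:R.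

Lemma countable_discrete (G : set M2) : psl_subgroup G -> psl_discrete G -> countable G.
Proof.
move=> [GSL G1 GM GV GN] [e [e0 De]].
apply: (@count2 _ G [set: nat * ('M[int]_2 * 'M[int]_2)]
   (fun A u => bnd A u.1 /\ u = enc e u.1 A)).
- exact: countableP.
- move=> A GA.
  have [r1 [r10 H1]] := bound_mx A; have [r2 [r20 H2]] := bound_mx (invmx A).
  pose N := (Num.truncn (r1 + r2)).+1.
  have hN : r1 + r2 <= N%:R by apply/ltW/truncnS_gt.
  exists (enc e N A); split => //; split => //= i j.
  have := H1 i j; have := H2 i j; lra.
- move=> A B u GA GB [bA uA] [bB uB].
  set N := u.1 in bA bB uA uB.
  have N0 : (0 : Rdefinitions.R) <= N%:R by rewrite ler0n.
  have sp : 0 < scl e N by rewrite /scl; apply: divr_gt0 => //; apply: mulr_gt0 => //; lra.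
  have EE : enc e N A = enc e N B by rewrite -uA -uB.
  case: EE => /matrixP ERe /matrixP EIm.
  have close : forall i j, nu (B i j - A i j) * scl e N < 2.
    move=> i j.
    have := ERe i j; have := EIm i j; rewrite !mxE => fI fR.
    have c1 := floor_close _ _ _ sp fR; have c2 := floor_close _ _ _ sp fI.
    have := nu_ReIm (A i j - B i j); rewrite ReB ImB => hle.
    rewrite -nuN opprB.
    have := ler_wpM2r (ltW sp) hle; rewrite mulrDl; lra.
  have uA' := unitSL _ (GSL _ GA).
  pose C := invmx A *m B.
  have GC : G C by apply: GM => //; apply: GV.
  have CE : forall i j, C i j - (1%:M : M2) i j = invmx A i i0 * (B i0 j - A i0 j) + invmx A i i1 * (B i1 j - A i1 j).
    move=> i j.
    have -> : C i j - (1%:M : M2) i j = (invmx A *m (B - A)) i j.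
      by rewrite mulmxBr mulVmx // !mxE.
    by rewrite mul2 !mxE.
  have [C1|C1] : psl_trivial C.
    apply: De => // i j.
    rewrite normE ltcR CE.
    have [a0 a0'] := bA i i0; have [a1 a1'] := bA i i1.
    have d0 := close i0 j; have d1 := close i1 j.
    have n0 := nu_ge0 (B i0 j - A i0 j); have n1 := nu_ge0 (B i1 j - A i1 j).
    have m0 := nu_ge0 (invmx A i i0); have m1 := nu_ge0 (invmx A i i1).
    apply: le_lt_trans (nuD _ _) _; rewrite !nuM.
    set x0 := nu (invmx A i i0) in a0' m0 *; set x1 := nu (invmx A i i1) in a1' m1 *.
    set y0 := nu (B i0 j - A i0 j) in d0 n0 *; set y1 := nu (B i1 j - A i1 j) in d1 n1 *.
    have Ne : scl e N * e = 4 * (N%:R + 1) by rewrite /scl mulrVK // unitfE gt_eqF.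

    suff : (x0 * y0 + x1 * y1) * scl e N < scl e N * e.
      by rewrite [_ * e]mulrC ltr_pM2r.
    rewrite Ne mulrDl -!mulrA.
    have : x0 * (y0 * scl e N) <= N%:R * 2.
      apply: ler_pM => //; [by apply: mulr_ge0 => //; apply: ltW| exact: ltW].
    have : x1 * (y1 * scl e N) <= N%:R * 2.
      apply: ler_pM => //; [by apply: mulr_ge0 => //; apply: ltW| exact: ltW].
    lra.
  + left. by rewrite -(mulKVmx uA' B) -/C C1 mulmx1.
  + right. by rewrite -(mulKVmx uA' B) -/C C1 mulmxN mulmx1.
Qed.

Theorem mainTheorem19 (Gamma : set M2) :
  kleinian Gamma -> countable (C_set Gamma).
Proof.
move=> [sg disc _].
have cG := countable_discrete _ sg disc.
case: sg => [GSL G1 GM GV GN].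
apply: (@count2 _ (C_set Gamma) (((Gamma `*` Gamma) `*` Gamma) `*` Gamma)
  (fun psi u => [/\ psi *m u.1.1.1 *m invmx psi = u.1.2,
                    psi *m u.1.1.2 *m invmx psi = u.2 &
                    ~ (u.1.2 *m u.2 = u.2 *m u.1.2 \/ u.1.2 *m u.2 = - (u.2 *m u.1.2))])).
- by do 3 apply: countableX => //.
- move=> psi [SLpsi nonel].
  have [X [Y [[cX GX] [[cY GY] nc]]]] : exists X Y, (conjugate psi Gamma `&` Gamma) X /\
      (conjugate psi Gamma `&` Gamma) Y /\
      ~ (X *m Y = Y *m X \/ X *m Y = - (Y *m X)).
    apply: NNPP => nex; apply: nonel => X Y HX HY.
    apply: NNPP => nc; apply: nex; by exists X, Y.
  case: cX => A GA EA; case: cY => B GB EB.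
  by exists (((A, B), X), Y).
- move=> psi phi [[[A B] X] Y] [SLpsi _] [SLphi _] /= [EX EY nc] [FX FY _].
  have upsi := unitSL _ SLpsi; have uphi := unitSL _ SLphi.
  pose g := invmx psi *m phi.
  have comm : forall A X, psi *m A *m invmx psi = X -> phi *m A *m invmx phi = X ->
      g *m A = A *m g.
    move=> A0 X0 E F.
    have h1 : phi *m A0 = X0 *m phi by rewrite -F mulmxKV.
    have h2 : invmx psi *m X0 = A0 *m invmx psi by rewrite -E !mulmxA mulVmx // mul1mx.
    by rewrite /g -mulmxA h1 mulmxA h2 mulmxA.
  have [[p gp]|AB] := centr2 _ _ _ (comm _ _ EX FX) (comm _ _ EY FY).
  + have dg : \det g = 1.
      by rewrite /g det_mulmx det_inv SLpsi SLphi invr1 mulr1.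
    have phiE : phi = psi *m g by rewrite /g mulKVmx.
    move: dg; rewrite gp det_scalar => /eqP; rewrite sqrf_eq1 => /orP [] /eqP p1.
    * by left; rewrite phiE gp p1 mul_mx_scalar scale1r.
    * by right; rewrite phiE gp p1 mul_mx_scalar scaleN1r.
  + exfalso; apply: nc; left.
    rewrite -EX -EY !mulmxA !(mulmxKV upsi).
    by rewrite -(mulmxA psi A B) -(mulmxA psi B A) AB.
Qed.
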